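(* For $\alpha\in\mathbb{C}$ and integers $m\geq1$, $r\geq1$, \[ \int_{[0,1]^r}\big[1-(1-\alpha)x_1\cdots x_r\big]^{m-1}dx_1\cdots dx_r=\sum_{m\geq m_1\geq\cdots\geq m_r\geq1}\frac{\alpha^{m_r-1}}{m\,m_1\cdots m_{r-1}}. \]
   Context: For $r=1$ the denominator on the right is just $m$. *)

(* Defs.v *)
From Stdlib Require Import Reals List.
From Coquelicot Require Import Coquelicot.
Import ListNotations.

(* Iterated integral over the unit cube [0,1]^r of F : list R -> C,
   F [x1; ...; xr] ; innermost integration variable is the last one. *)
Fixpoint cube_int (r : nat) (F : list R -> C) : C :=
  match r with
  | O => F nil
  | S r' => RInt (V := C_R_CompleteNormedModule)
              (fun x => cube_int r' (fun xs => F (x :: xs))) 0 1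
  end.

(* chains r b = all lists [m1; ...; mr] with b >= m1 >= ... >= mr >= 1 *)
Fixpoint chains (r b : nat) : list (list nat) :=
  match r with
  | O => [nil]
  | S r' => flat_map (fun k => map (cons k) (chains r' k)) (seq 1 b)
  end.

Definition chain_term (alpha : C) (m : nat) (l : list nat) : C :=
  (Cpow alpha (last l 1%nat - 1) /
   RtoC (INR m * fold_right Rmult 1 (map INR (removelast l))))%C.

Definition chain_sum (alpha : C) (m r : nat) : C :=
  fold_right Cplus (RtoC 0) (map (chain_term alpha m) (chains r m)).

(* Main.v *)
Require Import Defs.
From Stdlib Require Import Reals List Lra Lia.
Import ListNotations.
From Coquelicot Require Import Coquelicot.

Lemma dC_eq (f : C -> C) z l l' : is_derive (K:=C_AbsRing) (V:=AbsRing_NormedModule C_AbsRing) f z l -> l = l' -> is_derive (K:=C_AbsRing) (V:=AbsRing_NormedModule C_AbsRing) f z l'.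
Proof. intros H ->; exact H. Qed.

Lemma dC_mult (f g : C -> C) z df dg :
  is_derive (K:=C_AbsRing) (V:=AbsRing_NormedModule C_AbsRing) f z df -> is_derive (K:=C_AbsRing) (V:=AbsRing_NormedModule C_AbsRing) g z dg ->
  is_derive (K:=C_AbsRing) (V:=AbsRing_NormedModule C_AbsRing) (fun z => (f z * g z)%C) z (df * g z + f z * dg)%C.
Proof. intros Hf Hg. apply (is_derive_mult f g z df dg Hf Hg). intros; apply Cmult_comm. Qed.

Lemma dC_plus (f g : C -> C) z df dg :
  is_derive (K:=C_AbsRing) (V:=AbsRing_NormedModule C_AbsRing) f z df -> is_derive (K:=C_AbsRing) (V:=AbsRing_NormedModule C_AbsRing) g z dg ->
  is_derive (K:=C_AbsRing) (V:=AbsRing_NormedModule C_AbsRing) (fun z => (f z + g z)%C) z (df + dg)%C.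
Proof. intros Hf Hg. apply (is_derive_plus (V:=AbsRing_NormedModule C_AbsRing) f g z df dg Hf Hg). Qed.

Lemma dC_const (a : C) z : is_derive (K:=C_AbsRing) (V:=AbsRing_NormedModule C_AbsRing) (fun _ => a) z (RtoC 0).
Proof. apply (is_derive_const (K:=C_AbsRing) (V:=AbsRing_NormedModule C_AbsRing) a z). Qed.

Lemma dC_id z : is_derive (K:=C_AbsRing) (V:=AbsRing_NormedModule C_AbsRing) (fun z : C => z) z (RtoC 1).
Proof. apply (is_derive_id (K:=C_AbsRing) z). Qed.

Lemma du (c z : C) : is_derive (K:=C_AbsRing) (V:=AbsRing_NormedModule C_AbsRing) (fun z => (1 - c * z)%C) z (- c)%C.
Proof.
  apply (is_derive_ext (K:=C_AbsRing) (V:=AbsRing_NormedModule C_AbsRing) (fun z => (1 + (- c) * z)%C)).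
  { intros t. simpl. ring. }
  apply dC_eq with (RtoC 0 + (RtoC 0 * z + (- c) * RtoC 1))%C.
  - apply (dC_plus (fun _ => RtoC 1) (fun z => (- c * z)%C)). apply dC_const. apply (dC_mult (fun _ => (- c)%C) (fun z => z)). apply dC_const. apply dC_id.
  - simpl. ring.
Qed.
Notation dC := (is_derive (K:=C_AbsRing) (V:=AbsRing_NormedModule C_AbsRing)).

Lemma du_pow c n z : dC (fun z => Cpow (1 - c*z) (S n)) z (RtoC (INR (S n)) * (-c) * Cpow (1 - c*z) n)%C.
Proof.
  induction n.
  - apply dC_eq with (-c * RtoC 1 + (1 - c * z) * RtoC 0)%C.
    + apply (dC_mult (fun z => (1 - c*z)%C) (fun _ => RtoC 1)). apply du. apply dC_const.
    + simpl. ring.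
  - apply dC_eq with (-c * Cpow (1 - c*z) (S n) + (1 - c*z) * (RtoC (INR (S n)) * -c * Cpow (1 - c*z) n))%C.
    + apply (dC_mult (fun z => (1 - c*z)%C) (fun z => Cpow (1 - c*z) (S n))). apply du. apply IHn.
    + rewrite (S_INR (S n)), RtoC_plus. change (Cpow (1 - c*z) (S n)) with ((1 - c*z) * Cpow (1 - c*z) n)%C. match goal with |- ?a = ?b => change (@eq C a b) end. ring.
Qed.

Lemma Rabs_sq1 a : Rabs a * (Rabs a * 1) = a * (a * 1).
Proof. rewrite !Rmult_1_r, <- Rabs_mult. apply Rabs_pos_eq. apply Rle_0_sqr. Qed.

Lemma transfer (f : C -> C) (x : R) (l : C) :
  is_derive (K:=C_AbsRing) (V:=AbsRing_NormedModule C_AbsRing) f (RtoC x) l ->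
  is_derive (K:=R_AbsRing) (V:=C_R_NormedModule) (fun t => f (RtoC t)) x l.
Proof.
  intros [_ H]. split.
  - apply is_linear_scal_l.
  - intros x0 Hx0.
    apply (is_filter_lim_locally_unique (K:=R_AbsRing) (V:=R_NormedModule)) in Hx0. subst x0.
    intros eps. specialize (H (RtoC x) (fun P HP => HP) eps).
    destruct H as [d Hd]. exists d. intros t Ht.
    assert (Hb : ball (M:=AbsRing_UniformSpace C_AbsRing) (RtoC x) d (RtoC t)).
    { unfold ball in *; simpl in *. unfold AbsRing_ball in *. simpl in *.
      unfold abs, minus, plus, opp in *; simpl in *.
      rewrite <- RtoC_opp, <- RtoC_plus, Cmod_R. exact Ht. }
    specialize (Hd _ Hb). simpl in Hd |- *.
    unfold norm in *. simpl in *. unfold minus, plus, opp, scal in *; simpl in *.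
    unfold prod_norm, prod_plus, prod_opp, prod_scal in *. simpl in *.
    unfold abs in *; simpl in *.
    rewrite <- RtoC_opp, <- RtoC_plus, Cmod_R in Hd.
    destruct (f (RtoC t)) as [a b]. destruct (f (RtoC x)) as [c e]. destruct l as [p q].
    unfold norm, plus, opp, scal, mult in *; simpl in *. unfold abs in *; simpl in *.
    rewrite !Rabs_sq1.
    refine (Rle_trans _ _ _ _ Hd). right. unfold Cmod. f_equal. simpl.
    unfold Rminus, mult; simpl. ring.
Qed.

Ltac ceq := match goal with |- ?a = ?b => change (@eq C a b) end.

Lemma ex_du_pow c n z : exists l, dC (fun z => Cpow (1 - c*z) n) z l.
Proof.
  destruct n.
  - exists (RtoC 0). apply (dC_const (RtoC 1)).
  - eexists. apply du_pow.
Qed.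

Lemma cont_R (f : C -> C) x : (exists l, dC f (RtoC x) l) ->
  @continuous R_UniformSpace C_R_NormedModule (fun t => f (RtoC t)) x.
Proof.
  intros [l H]. apply (ex_derive_continuous (K:=R_AbsRing) (V:=C_R_NormedModule)).
  exists l. apply transfer. exact H.
Qed.

Lemma dh c n z : dC (fun z => (z * Cpow (1 - c*z) (S n))%C) z
  (RtoC 1 * Cpow (1-c*z) (S n) + z * (RtoC (INR (S n)) * -c * Cpow (1-c*z) n))%C.
Proof. apply (dC_mult (fun z => z) (fun z => Cpow (1 - c*z) (S n))). apply dC_id. apply du_pow. Qed.

Lemma ex_dh' c n z : exists l, dC (fun z => (RtoC 1 * Cpow (1-c*z) (S n) + z * (RtoC (INR (S n)) * -c * Cpow (1-c*z) n))%C) z l.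
Proof.
  destruct (ex_du_pow c n z) as [l1 H1].
  eexists. apply (dC_plus (fun z => RtoC 1 * Cpow (1-c*z) (S n))%C (fun z => z * (RtoC (INR (S n)) * -c * Cpow (1-c*z) n))%C).
  - apply (dC_mult (fun _ => RtoC 1) (fun z => Cpow (1-c*z) (S n))). apply dC_const. apply du_pow.
  - apply (dC_mult (fun z => z) (fun z => (RtoC (INR (S n)) * -c * Cpow (1-c*z) n))%C). apply dC_id.
    apply (dC_mult (fun _ => RtoC (INR (S n)) * -c)%C (fun z => Cpow (1-c*z) n)). apply dC_const. exact H1.
Qed.

Definition Csum (l : list C) : C := fold_right Cplus (RtoC 0) l.

Lemma Csum_app l1 l2 : Csum (l1 ++ l2) = (Csum l1 + Csum l2)%C.
Proof. induction l1; simpl. ceq; ring. unfold Csum in *. simpl. rewrite IHl1. ceq; ring. Qed.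

Lemma Csum_seq_S (g : nat -> C) a n : Csum (map g (seq a (S n))) = (Csum (map g (seq a n)) + g (a + n)%nat)%C.
Proof. rewrite seq_S, map_app, Csum_app. simpl. ceq; ring. Qed.

Definition G c k := Csum (map (fun j => Cpow (1 - c) (j-1)) (seq 1 k)).

Lemma Cinv_cancel k z : k <> 0 -> (RtoC (/k) * (RtoC k * z))%C = z.
Proof. intros Hk. rewrite Cmult_assoc, <- RtoC_mult, Rinv_l by exact Hk. ceq; ring. Qed.

Lemma Cinv_cancel' k z : k <> 0 -> (RtoC k * (RtoC (/k) * z))%C = z.
Proof. intros Hk. rewrite Cmult_assoc, <- RtoC_mult, Rinv_r by exact Hk. ceq; ring. Qed.

Lemma is_RInt_eq (f : R -> C) a b l l' : is_RInt (V:=C_R_CompleteNormedModule) f a b l -> l = l' -> is_RInt (V:=C_R_CompleteNormedModule) f a b l'.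
Proof. intros H ->; exact H. Qed.

Lemma int_u c n : is_RInt (V:=C_R_CompleteNormedModule) (fun t => Cpow (1 - c*RtoC t) n) 0 1 (RtoC (/ INR (S n)) * G c (S n))%C.
Proof.
  induction n.
  - apply is_RInt_eq with (scal (1 - 0) (RtoC 1)).
    + apply (is_RInt_const (V:=C_R_NormedModule)).
    + rewrite scal_R_Cmult. unfold G. simpl. ceq. rewrite Rinv_1, Rminus_0_r. ring.
  - pose (D := fun z => (RtoC 1 * Cpow (1-c*z) (S n) + z * (RtoC (INR (S n)) * -c * Cpow (1-c*z) n))%C).
    assert (Hd : is_RInt (V:=C_R_CompleteNormedModule) (fun t => D (RtoC t)) 0 1
       (minus (RtoC 1 * Cpow (1 - c * RtoC 1) (S n)) (RtoC 0 * Cpow (1 - c * RtoC 0) (S n)))%C).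
    { apply (is_RInt_derive (V:=C_R_CompleteNormedModule) (fun t => (RtoC t * Cpow (1 - c * RtoC t) (S n))%C)).
      - intros x _. apply (transfer (fun z => (z * Cpow (1 - c*z) (S n))%C)). apply dh.
      - intros x _. apply (cont_R D). apply ex_dh'. }
    pose proof (is_RInt_scal _ _ _ (INR (S n)) _ IHn) as H2.
    pose proof (is_RInt_plus _ _ _ _ _ _ Hd H2) as H3.
    pose proof (is_RInt_scal _ _ _ (/ INR (S (S n))) _ H3) as H4.
    refine (is_RInt_eq _ _ _ _ _ (is_RInt_ext _ _ _ _ _ _ H4) _).
    + intros x _. unfold D. rewrite !scal_R_Cmult. change (plus ?a ?b) with (Cplus a b). ceq.
      transitivity (RtoC (/ INR (S (S n))) * (RtoC (INR (S (S n))) * Cpow (1 - c*RtoC x) (S n)))%C.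
      2:{ apply Cinv_cancel. apply not_0_INR. discriminate. }
      f_equal. rewrite (S_INR (S n)), RtoC_plus.
      change (Cpow (1 - c*RtoC x) (S n)) with ((1 - c*RtoC x) * Cpow (1 - c*RtoC x) n)%C. ring.
    + rewrite !scal_R_Cmult. change (minus ?a ?b) with (Cminus a b). change (plus ?a ?b) with (Cplus a b). ceq.
      f_equal. rewrite Cinv_cancel' by (apply not_0_INR; discriminate).
      unfold G. rewrite (Csum_seq_S _ 1 (S n)). replace (1 + S n - 1)%nat with (S n) by lia.
      rewrite Cmult_1_r. ring.
Qed.

Lemma Cinv_RtoC z : Cinv (RtoC z) = RtoC (/ z).
Proof.
  unfold Cinv, RtoC; simpl. f_equal.
  - destruct (Req_dec z 0) as [->|Hz].
    + rewrite Rinv_0. unfold Rdiv. ring.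
    + field. auto.
  - unfold Rdiv. ring.
Qed.

Fixpoint P (b : C) (r : nat) (k : nat) (y : R) : C :=
  match r with
  | O => Cpow (1 - b * RtoC y) (k - 1)
  | S r' => (RtoC (/ INR k) * Csum (map (fun j => P b r' j y) (seq 1 k)))%C
  end.

Lemma lemA b k y : (1 <= k)%nat ->
  is_RInt (V:=C_R_CompleteNormedModule) (fun x => P b 0 k (y*x)) 0 1 (P b 1 k y).
Proof.
  intros Hk. destruct k as [|k]; [lia|].
  pose proof (int_u (b * RtoC y) k) as H.
  simpl. replace (k - 0)%nat with k by lia.
  refine (is_RInt_ext _ _ _ _ _ _ H).
  intros x _. rewrite RtoC_mult. ceq. f_equal. ring.
Qed.

Lemma is_RInt_Csum (l : list nat) (g : nat -> R -> C) (v : nat -> C) :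
  (forall j, In j l -> is_RInt (V:=C_R_CompleteNormedModule) (g j) 0 1 (v j)) ->
  is_RInt (V:=C_R_CompleteNormedModule) (fun x => Csum (map (fun j => g j x) l)) 0 1 (Csum (map v l)).
Proof.
  induction l as [|a l IH]; intros Hl; simpl.
  - apply is_RInt_eq with (scal (1 - 0) (RtoC 0)).
    + apply (is_RInt_const (V:=C_R_NormedModule)).
    + rewrite scal_R_Cmult. ceq. ring.
  - apply (is_RInt_plus (V:=C_R_NormedModule) (g a) (fun x => Csum (map (fun j => g j x) l))).
    + apply Hl. left; reflexivity.
    + apply IH. intros j Hj. apply Hl. right; exact Hj.
Qed.

Lemma lemB b r : forall k y, (1 <= k)%nat ->
  is_RInt (V:=C_R_CompleteNormedModule) (fun x => P b r k (y*x)) 0 1 (P b (S r) k y).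
Proof.
  induction r as [|r IH]; intros k y Hk.
  - apply lemA; exact Hk.
  - change (P b (S (S r)) k y) with (RtoC (/ INR k) * Csum (map (fun j => P b (S r) j y) (seq 1 k)))%C.
    rewrite <- scal_R_Cmult.
    refine (is_RInt_ext _ _ _ _ _ _ (is_RInt_scal _ _ _ (/ INR k) _ _)).
    + intros x _. rewrite scal_R_Cmult. reflexivity.
    + apply (is_RInt_Csum (seq 1 k) (fun j x => P b r j (y*x)) (fun j => P b (S r) j y)).
      intros j Hj. apply in_seq in Hj. apply IH. lia.
Qed.

Lemma cube_int_ext r : forall F G, (forall xs, F xs = G xs) -> cube_int r F = cube_int r G.
Proof.
  induction r as [|r IH]; intros F G H; simpl.
  - apply H.
  - apply (RInt_ext (V:=C_R_CompleteNormedModule)). intros x _. apply IH. intros xs. apply H.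
Qed.

Lemma lemC b r : forall k y, (1 <= k)%nat ->
  cube_int r (fun xs => P b 0 k (y * fold_right Rmult 1 xs)) = P b r k y.
Proof.
  induction r as [|r IH]; intros k y Hk.
  - simpl. rewrite Rmult_1_r. reflexivity.
  - simpl cube_int.
    rewrite (RInt_ext (V:=C_R_CompleteNormedModule) _ (fun x => P b r k (y*x))).
    + apply (is_RInt_unique (V:=C_R_CompleteNormedModule)). apply lemB. exact Hk.
    + intros x _. rewrite <- (IH k (y*x) Hk). apply cube_int_ext. intros xs. simpl.
      rewrite Rmult_assoc. reflexivity.
Qed.

Lemma Csum_flat_map {A B} (g : B -> C) (h : A -> list B) l :
  Csum (map g (flat_map h l)) = Csum (map (fun j => Csum (map g (h j))) l).
Proof.
  induction l as [|a l IH]; simpl. reflexivity.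
  rewrite map_app, Csum_app, IH. reflexivity.
Qed.

Lemma Csum_scal {A} (c : C) (g : A -> C) l :
  (c * Csum (map g l))%C = Csum (map (fun j => c * g j)%C l).
Proof.
  induction l as [|a l IH]; simpl. ceq. ring.
  unfold Csum in *. simpl. rewrite <- IH. ceq. ring.
Qed.

Lemma chains_nonnil r j c : In c (chains (S r) j) -> c <> nil.
Proof.
  simpl. intros H. apply in_flat_map in H. destruct H as [x [_ Hx]].
  apply in_map_iff in Hx. destruct Hx as [c' [<- _]]. discriminate.
Qed.

Lemma lemD (alpha : C) r : forall k,
  P (RtoC 1 - alpha)%C (S r) k 1 = chain_sum alpha k (S r).
Proof.
  induction r as [|r IH]; intros k.
  - unfold chain_sum. simpl chains. change (fold_right Cplus (RtoC 0)) with Csum.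
    rewrite Csum_flat_map. simpl P. rewrite Csum_scal. f_equal. apply map_ext. intros j.
    simpl. unfold chain_term. simpl. unfold Cdiv. rewrite Cinv_RtoC, Rmult_1_r.
    ceq. replace (1 - (RtoC 1 - alpha) * RtoC 1)%C with alpha by (ceq; ring). ring.
  - unfold chain_sum. change (chains (S (S r)) k) with
      (flat_map (fun k0 => map (cons k0) (chains (S r) k0)) (seq 1 k)).
    change (fold_right Cplus (RtoC 0)) with Csum.
    rewrite Csum_flat_map. change (P (RtoC 1 - alpha)%C (S (S r)) k 1) with
      (RtoC (/ INR k) * Csum (map (fun j => P (RtoC 1 - alpha)%C (S r) j 1) (seq 1 k)))%C.
    rewrite Csum_scal. f_equal. apply map_ext. intros j.
    rewrite IH. unfold chain_sum. change (fold_right Cplus (RtoC 0)) with Csum.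
    rewrite Csum_scal, map_map. f_equal. apply map_ext_in. intros c Hc.
    apply chains_nonnil in Hc. destruct c as [|c0 c']; [congruence|].
    unfold chain_term. unfold Cdiv.
    change (last (j :: c0 :: c') 1%nat) with (last (c0 :: c') 1%nat).
    change (removelast (j :: c0 :: c')) with (j :: removelast (c0 :: c')).
    change (map INR (j :: removelast (c0 :: c'))) with (INR j :: map INR (removelast (c0 :: c'))).
    change (fold_right Rmult 1 (INR j :: map INR (removelast (c0 :: c')))) with
      (INR j * fold_right Rmult 1 (map INR (removelast (c0 :: c')))).
    rewrite !Cinv_RtoC, !Rinv_mult, !RtoC_mult. ceq. ring.
Qed.

Theorem lemma2p1 (alpha : C) (m r : nat) (hm : (1 <= m)%nat) (hr : (1 <= r)%nat) :
  cube_int r (fun xs => Cpow (RtoC 1 - (RtoC 1 - alpha) * RtoC (fold_right Rmult 1 xs))%C (m - 1))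
  = chain_sum alpha m r.
Proof.
  destruct r as [|r]; [lia|].
  rewrite <- lemD.
  rewrite <- (lemC (RtoC 1 - alpha)%C (S r) m 1 hm).
  apply cube_int_ext. intros xs. simpl. rewrite Rmult_1_l. reflexivity.
Qed.
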